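(* Let $\alpha>-1$, $d\in\widetilde{D}$, $p=(L_n^{(\alpha+1)})_{n\in\mathbb{N}_0}$, $q=(L_n^{(\alpha)})_{n\in\mathbb{N}_0}$, and let $T=E_{p,d}$ be regarded as an operator in $H(q)$ with domain $\mathcal{P}_c$. Let $f=\sum_kf_kq_k\in H(q)$ be such that (i) $\lim_{n\to\infty}\sum_{u=1}^nf_u(d_u-d_{u-1})$ exists and is finite, say equal to $S$; (ii) the sequence $(g_k)_{k\in\mathbb{N}_0}$ defined by $g_0=S+f_0d_0$ and $g_k=S-\sum_{u=1}^kf_u(d_u-d_{u-1})+f_kd_k$ for $k\ge1$ is in $\ell_2$; (iii) $\lim_{n\to\infty}(n+1)|f_nd_n-g_n|^2=0$. Then $f\in D(\overline{T})$ and $g=\lim_{n\to\infty}\sum_{t=0}^ng_tq_t$ is the unique element of $H(q)$ such that $(f,g)\in G(\overline{T})$.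
   Context: $\mathcal{P}_c$ is the space of polynomials in one real variable with complex coefficients. For $\beta>-1$, $L_n^{(\beta)}(x)=\sum_{k=0}^n\frac{(-1)^k}{k!}\binom{n+\beta}{n-k}x^k$ is the generalized Laguerre polynomial. For a sequence $Q=(Q_n)$ of polynomials with $\deg Q_n=n$, $H(Q)$ is the completion of $\mathcal{P}_c$ with respect to the inner product making $(Q_n)$ orthonormal; $g\in H(Q)$ is written $g=\sum_kg_kQ_k$, $(g_k)\in\ell_2$. $\widetilde{D}$ is the set of non-constant sequences of non-zero complex numbers. For a polynomial sequence $p$ and $d\in\widetilde{D}$, $E_{p,d}$ is the linear map on $\mathcal{P}_c$ with $E_{p,d}(p_n)=d_np_n$. $\overline{T}$ denotes the closure of $T$, whose graph $G(\overline{T})$ is the closure of the graph of $T$ in $H(q)\times H(q)$. *)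

(* Defs.v *)
From HB Require Import structures.
From mathcomp Require Import all_boot all_order all_algebra.
From mathcomp Require Import all_classical all_reals all_analysis.
From mathcomp Require Import complex.
Set Implicit Arguments. Unset Strict Implicit. Unset Printing Implicit Defensive.
Import Order.TTheory GRing.Theory Num.Theory numFieldNormedType.Exports.
Local Open Scope ring_scope.

Definition sqmod (R : realType) (z : R[i]) : R :=
  (complex.Re z) ^+ 2 + (complex.Im z) ^+ 2.

Definition gbinom (R : realType) (x : R) (m : nat) : R :=
  (\prod_(i < m) (x - i%:R)) / (m`!)%:R.

Definition laguerre (R : realType) (b : R) (n : nat) : {poly R[i]} :=
  \sum_(k < n.+1)
    (real_complex R ((-1) ^+ k / (k`!)%:R * gbinom (n%:R + b) (n - k)) *: 'X^k).

Definition inDtilde (R : realType) (d : nat -> R[i]) : Prop :=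
  (forall n, d n != 0) /\ exists m n, d m != d n.

Definition l2 (R : realType) (c : nat -> R[i]) : Prop :=
  cvgn (series (fun k => sqmod (c k))).

Definition l2dist2 (R : realType) (a b : nat -> R[i]) : R :=
  limn (series (fun k => sqmod (a k - b k))).

(* c is the (finitely supported) coordinate sequence of the polynomial P in the
   basis q = (L_n^(alpha)); this is how P_c sits inside H(q) ~ l_2 *)
Definition qcoord (R : realType) (alpha : R) (P : {poly R[i]}) (c : nat -> R[i]) : Prop :=
  exists N, (forall k, (N <= k)%N -> c k = 0) /\
            P = \sum_(k < N) c k *: laguerre alpha k.

(* (f, g) (elements of H(q) given by their coefficient sequences) lies in the
   closure in H(q) x H(q) of the graph {(P, T P) : P in P_c} of T *)
Definition in_graph_closure (R : realType) (alpha : R)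
    (T : {poly R[i]} -> {poly R[i]}) (f g : nat -> R[i]) : Prop :=
  forall e : R, 0 < e -> exists (P : {poly R[i]}) (c t : nat -> R[i]),
    [/\ qcoord alpha P c, qcoord alpha (T P) t, l2dist2 f c < e & l2dist2 g t < e].

Definition in_closure_domain (R : realType) (alpha : R)
    (T : {poly R[i]} -> {poly R[i]}) (f : nat -> R[i]) : Prop :=
  exists g, l2 g /\ in_graph_closure alpha T f g.

Definition psum (R : realType) (f d : nat -> R[i]) (n : nat) : R[i] :=
  \sum_(1 <= u < n.+1) f u * (d u - d u.-1).

Definition gseq (R : realType) (f d : nat -> R[i]) (S : R[i]) (k : nat) : R[i] :=
  if k == 0%N then S + f 0%N * d 0%N else S - psum f d k + f k * d k.

(* Main.v *)
Require Import Defs.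
From HB Require Import structures.
From mathcomp Require Import all_boot all_order all_algebra.
From mathcomp Require Import all_classical all_reals all_analysis.
From mathcomp Require Import complex.
From mathcomp Require Import ring lra.
Import Order.TTheory GRing.Theory Num.Theory numFieldNormedType.Exports.
Local Open Scope classical_set_scope.
Local Open Scope ring_scope.
Set Implicit Arguments.

Section Alg.
Variable R : realType.

Lemma gbinom0 (x : R) : gbinom x 0 = 1.
Proof. by rewrite /gbinom big_ord0 fact0 divr1. Qed.

Lemma gbinomS (x : R) m : gbinom (x + 1) m.+1 = gbinom x m + gbinom x m.+1.
Proof.
rewrite /gbinom big_ord_recl big_ord_recr /=.
rewrite subr0.
have -> : \prod_(i < m) (x + 1 - (bump 0 i)%:R) = \prod_(i < m) (x - i%:R).
  by apply: eq_bigr => i _; rewrite /bump /= add1n -natr1; ring.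
set P := \prod_(i < m) _.
have f0 : (m`!)%:R != 0 :> R by rewrite pnatr_eq0 -lt0n fact_gt0.
have m0 : (m.+1)%:R != 0 :> R by rewrite pnatr_eq0.
rewrite factS natrM.
field.
by rewrite f0 /= addrC natr1.
Qed.

Lemma laguerre0 (b c : R) : laguerre b 0 = laguerre c 0.
Proof. by rewrite /laguerre !big_ord1 /= !sub0n !gbinom0. Qed.

Lemma laguerreS (a : R) n :
  laguerre (a + 1) n.+1 = laguerre (a + 1) n + laguerre a n.+1.
Proof.
rewrite /laguerre [X in _ = _ + X]big_ord_recr [X in X = _]big_ord_recr /= [RHS]addrA; congr (_ + _).
  rewrite -big_split /=; apply: eq_bigr => k _.
  rewrite -scalerDl -rmorphD -mulrDr; congr (_ *: _); congr (real_complex _ _); congr (_ * _).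
  have kn : (k <= n)%N by rewrite -ltnS.
  rewrite subSn // (_ : n.+1%:R + (a + 1) = (n.+1%:R + a) + 1); last by ring.
  rewrite gbinomS; congr (gbinom _ _ + gbinom _ _).
  by rewrite -natr1; ring.
by rewrite !subnn !gbinom0.
Qed.

Lemma laguerre_sum (a : R) n :
  laguerre (a + 1) n = \sum_(k < n.+1) laguerre a k.
Proof.
elim: n => [|n IH]; first by rewrite big_ord1; apply: laguerre0.
by rewrite laguerreS IH [in RHS]big_ord_recr.
Qed.

Lemma coef_lag_top (b : R) n :
  (laguerre b n)`_n = real_complex R ((-1) ^+ n / (n`!)%:R).
Proof.
rewrite /laguerre coef_sum big_ord_recr /= big1 ?add0r.
  by rewrite coefZ coefXn eqxx mulr1 subnn gbinom0 mulr1.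
by move=> k _; rewrite coefZ coefXn; case: k => k /= kn; rewrite gtn_eqF // mulr0.
Qed.

Lemma coef_lag_high (b : R) n i : (n < i)%N -> (laguerre b n)`_i = 0.
Proof.
move=> ni; rewrite /laguerre coef_sum big1 // => k _.
rewrite coefZ coefXn; case: k => k /= kn.
by rewrite gtn_eqF ?mulr0 // (leq_ltn_trans _ ni) // -ltnS.
Qed.

Lemma lag_indep (b : R) N (a : nat -> R[i]) :
  (forall k, (N <= k)%N -> a k = 0) ->
  \sum_(k < N) a k *: laguerre b k = 0 -> forall k, a k = 0.
Proof.
elim: N a => [|N IH] a az; first by move=> _ k; apply: az.
rewrite big_ord_recr /= => H.
have aN : a N = 0.
  have := congr1 (fun P : {poly R[i]} => P`_N) H.
  rewrite /= coef0 coefD coef_sum big1 ?add0r; last first.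
    by move=> k _; rewrite coefZ coef_lag_high ?mulr0.
  rewrite coefZ coef_lag_top => /eqP; rewrite mulf_eq0 => /orP[/eqP //|].
  move=> /eqP E; exfalso.
  have : ((-1) ^+ N / (N`!)%:R : R) != 0.
    rewrite mulf_eq0 invr_eq0 pnatr_eq0 negb_or; apply/andP; split; last by rewrite -lt0n fact_gt0.
    by rewrite expf_eq0 oppr_eq0 oner_eq0 andbF.
  by move/eqP; apply; apply: (@complexI R); rewrite E.
apply: IH.
  by move=> k; rewrite leq_eqVlt => /orP[/eqP <-//|]; apply: az.
by move: H; rewrite aN scale0r addr0.
Qed.
End Alg.

Section Op.
Variables (R : realType) (alpha : R) (d : nat -> R[i]) (T : {poly R[i]} -> {poly R[i]}).
Hypothesis hT : forall (a : R[i]) (u v : {poly R[i]}), T (a *: u + v) = a *: T u + T v.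
Hypothesis hTp : forall n, T (laguerre (alpha + 1) n) = d n *: laguerre (alpha + 1) n.

Local Notation q := (laguerre alpha).
Local Notation p := (laguerre (alpha + 1)).

Lemma T0 : T 0 = 0.
Proof.
have := hT 1 0 0; rewrite !scale1r addr0 => /(congr1 (fun x => x - T 0)).
by rewrite subrr addrK => <-.
Qed.

Lemma TD u v : T (u + v) = T u + T v.
Proof. by have := hT 1 u v; rewrite !scale1r. Qed.

Lemma TZ a u : T (a *: u) = a *: T u.
Proof. by rewrite -[a *: u]addr0 hT T0 addr0. Qed.

Lemma TB u v : T (u - v) = T u - T v.
Proof. by rewrite TD -scaleN1r TZ scaleN1r. Qed.

Lemma Tq N : T (q N) = (d N - d N.-1) *: \sum_(k < N) q k + d N *: q N.
Proof.
case: N => [|m].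
  by rewrite big_ord0 scaler0 add0r (@laguerre0 R alpha (alpha + 1)) hTp.
have -> : q m.+1 = p m.+1 - p m by rewrite laguerreS [p m + _]addrC addrK.
rewrite TB !hTp laguerreS laguerre_sum /=.
rewrite scalerDr scalerBl scalerBr scalerDr.
set A := d m.+1 *: \sum_(_ < _) _; set B := d m.+1 *: q _; set C := d m *: _.
rewrite [A + B]addrC addrK.
by rewrite [RHS]addrAC [A + B]addrC.
Qed.

Definition scoef (c : nat -> R[i]) N k :=
  c k * d k + \sum_(k.+1 <= u < N) c u * (d u - d u.-1).

Lemma Tsum (c : nat -> R[i]) N :
  T (\sum_(k < N) c k *: q k) = \sum_(k < N) scoef c N k *: q k.
Proof.
elim: N => [|N IH]; first by rewrite !big_ord0 T0.
rewrite big_ord_recr TD IH TZ Tq /= [RHS]big_ord_recr /=.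
rewrite /scoef big_geq // addr0 scalerDr addrA; congr (_ + _).
rewrite scalerA scaler_sumr -big_split /=; apply: eq_bigr => k _.
rewrite -scalerDl; congr (_ *: _).
by rewrite big_nat_recr //= addrA.
by rewrite scalerA.
Qed.
End Op.

Lemma sum_ext (R : realType) (c : nat -> R[i]) (F : nat -> {poly R[i]}) N1 N :
  (forall k, (N1 <= k)%N -> c k = 0) -> (N1 <= N)%N ->
  \sum_(k < N1) c k *: F k = \sum_(k < N) c k *: F k.
Proof.
move=> cz; elim: N => [|N IH]; first by rewrite leqn0 => /eqP ->.
rewrite leq_eqVlt => /orP[/eqP -> //|]; rewrite ltnS => NN; rewrite IH //.
by rewrite big_ord_recr /= (cz N NN) scale0r addr0.
Qed.

Lemma coord_rel (R : realType) (alpha : R) (d : nat -> R[i]) (T : {poly R[i]} -> {poly R[i]}) :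
  (forall (a : R[i]) (u v : {poly R[i]}), T (a *: u + v) = a *: T u + T v) ->
  (forall n, T (laguerre (alpha + 1) n) = d n *: laguerre (alpha + 1) n) ->
  forall P c t, qcoord alpha P c -> qcoord alpha (T P) t ->
  forall j, t j - t j.+1 = d j * (c j - c j.+1).
Proof.
move=> hT hTp P c t [N1 [c0 ->]] [N2 [t0 EP]].
set N := maxn N1 N2.
have cz k : (N <= k)%N -> c k = 0.
  by move=> Nk; apply: c0; apply: leq_trans Nk; apply: leq_maxl.
have tz k : (N <= k)%N -> t k = 0.
  by move=> Nk; apply: t0; apply: leq_trans Nk; apply: leq_maxr.
move: EP; rewrite (@sum_ext R c _ N1 N c0 (leq_maxl _ _)) (@sum_ext R t _ N2 N t0 (leq_maxr _ _)).
rewrite (@Tsum R alpha d T hT hTp) => /eqP; rewrite -subr_eq0 -sumrB => /eqP E.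
have ts k : (k < N)%N -> t k = @scoef R d c N k.
  move=> kN.
  have := @lag_indep R alpha N (fun k => if (k < N)%N then @scoef R d c N k - t k else 0).
  move=> /(_ _ _ k); rewrite kN => H; apply/eqP; rewrite eq_sym -subr_eq0; apply/eqP; apply: H.
    by move=> m; rewrite leqNgt => /negbTE ->.
  by rewrite -[RHS]E; apply: eq_bigr => i _; rewrite ltn_ord scalerBl.
move=> j; case: (ltngtP j.+1 N) => jN.
- rewrite !ts // ?(ltn_trans _ jN) // /scoef big_ltn //=.
  set X := \sum_(_ <= _ < _) _; ring.
- by rewrite !cz ?tz ?subrr ?mulr0 // ltnW.
- have jN' : (j < N)%N by rewrite -jN.
  rewrite ts // (tz j.+1); last by rewrite jN.
  rewrite (cz j.+1); last by rewrite jN.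
  rewrite /scoef big_geq; last by rewrite jN.
  ring.
Qed.

Section Sq.
Variable R : realType.
Implicit Types z w : R[i].

Lemma sqmod_ge0 z : 0 <= sqmod z.
Proof. by rewrite /sqmod addr_ge0 // sqr_ge0. Qed.

Lemma sqmodD z w : sqmod (z + w) <= 2 * (sqmod z + sqmod w).
Proof. case: z => a b; case: w => c e; rewrite /sqmod /=.
rewrite -subr_ge0 (_ : _ - _ = (a - c) ^+ 2 + (b - e) ^+ 2); first by rewrite addr_ge0 ?sqr_ge0.
ring. Qed.

Lemma sqmodN z : sqmod (- z) = sqmod z.
Proof. case: z => a b; rewrite /sqmod /=; ring. Qed.

Lemma sqmodM z w : sqmod (z * w) = sqmod z * sqmod w.
Proof. case: z => a b; case: w => c e; rewrite /sqmod /=; ring. Qed.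

Lemma sqmod_eq0 z : sqmod z <= 0 -> z = 0.
Proof.
case: z => a b; rewrite /sqmod /= => H.
have a0 : a = 0 by apply/eqP; rewrite -sqrf_eq0 eq_le sqr_ge0 andbT; nra.
have b0 : b = 0 by apply/eqP; rewrite -sqrf_eq0 eq_le sqr_ge0 andbT; nra.
by rewrite a0 b0.
Qed.

Lemma sqmod0 : sqmod (0 : R[i]) = 0.
Proof. by rewrite /sqmod /= expr0n /= addr0. Qed.

Lemma series_tail (u v : R^nat) n : (forall k, (n < k)%N -> u k = v k) ->
  cvgn (series v) ->
  series u @ \oo --> (limn (series v) - series v n.+1 + series u n.+1).
Proof.
move=> uv cv.
rewrite -(cvg_shiftn n.+1).
have -> : [sequence series u (m + n.+1)%N]_m =
          (fun m => series v (m + n.+1)%N - series v n.+1 + series u n.+1).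
  apply/funext => m /=; rewrite !series_addn [series v _ + _]addrC addrK [LHS]addrC; congr (_ + _).
  by apply: eq_big_nat => k /andP[nk _]; rewrite uv.
apply: cvgD; last exact: cvg_cst.
apply: cvgB; last exact: cvg_cst.
by rewrite (cvg_shiftn n.+1 (series v)).
Qed.

Lemma series_tail_cvg (u v : R^nat) n : (forall k, (n < k)%N -> u k = v k) ->
  cvgn (series v) ->
  limn (series u) = limn (series v) - series v n.+1 + series u n.+1.
Proof. by move=> uv cv; apply/cvg_lim => //; apply: series_tail. Qed.

Lemma tail_to0 (v : R^nat) : cvgn (series v) ->
  (fun n => limn (series v) - series v n.+1) @ \oo --> 0.
Proof.
move=> cv; rewrite -(subrr (limn (series v))).
apply: cvgB; first exact: cvg_cst.
by rewrite (cvg_shiftS (series v)).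
Qed.

Lemma le_lim_series (w : R^nat) j : (forall k, 0 <= w k) -> cvgn (series w) ->
  w j <= limn (series w).
Proof.
move=> w0 cw; apply: le_trans (nondecreasing_cvgn_le _ cw j.+1).
  by rewrite seriesSr lerDr /series /= sumr_ge0.
by apply/nondecreasing_seqP => m; rewrite seriesSr lerDl.
Qed.

Lemma l2_fin (f c : nat -> R[i]) N : l2 f -> (forall k, (N <= k)%N -> c k = 0) ->
  cvgn (series (fun k => sqmod (f k - c k))).
Proof.
move=> hf cz; apply/cvg_ex; eexists.
apply: (@series_tail _ (fun k => sqmod (f k)) N) => //.
by move=> k Nk; rewrite cz ?subr0 // ltnW.
Qed.

Lemma coord_bound (f c : nat -> R[i]) N j : l2 f -> (forall k, (N <= k)%N -> c k = 0) ->
  sqmod (f j - c j) <= l2dist2 f c.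
Proof.
move=> hf cz; rewrite /l2dist2; apply: (@le_lim_series (fun k => sqmod (f k - c k)) j).
  by move=> k; apply: sqmod_ge0.
exact: l2_fin cz.
Qed.

Lemma small0 (x K : R) : 0 < K -> (forall e, 0 < e -> x <= K * e) -> x <= 0.
Proof.
move=> K0 H; rewrite leNgt; apply/negP => x0.
have := H (x / (2 * K)); rewrite divr_gt0 ?mulr_gt0 // => /(_ isT).
rewrite (_ : K * (x / (2 * K)) = x / 2); first by lra.
by field; rewrite gt_eqF.
Qed.
End Sq.

Lemma closure_rel (R : realType) (alpha : R) (d : nat -> R[i]) (T : {poly R[i]} -> {poly R[i]}) f h :
  (forall (a : R[i]) (u v : {poly R[i]}), T (a *: u + v) = a *: T u + T v) ->
  (forall n, T (laguerre (alpha + 1) n) = d n *: laguerre (alpha + 1) n) ->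
  l2 f -> l2 h -> in_graph_closure alpha T f h ->
  forall j, h j - h j.+1 = d j * (f j - f j.+1).
Proof.
move=> hT hTp hf hh hcl j; apply/eqP; rewrite -subr_eq0; apply/eqP; apply: sqmod_eq0.
apply: (@small0 R _ (8 + 8 * sqmod (d j))).
  by rewrite ltr_wpDr // mulr_ge0 // sqmod_ge0.
move=> e e0; have [P [c [t [Pc Pt fc ht]]]] := hcl e e0.
have rel := @coord_rel R alpha d T hT hTp P c t Pc Pt j.
have [N1 [c0 _]] := Pc; have [N2 [t0 _]] := Pt.
have b1 := @coord_bound _ f c N1 j hf c0; have b2 := @coord_bound _ f c N1 j.+1 hf c0.
have b3 := @coord_bound _ h t N2 j hh t0; have b4 := @coord_bound _ h t N2 j.+1 hh t0.
set x1 := h j - t j in b3; set x2 := h j.+1 - t j.+1 in b4.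
set y1 := f j - c j in b1; set y2 := f j.+1 - c j.+1 in b2.
have -> : h j - h j.+1 - d j * (f j - f j.+1) = (x1 - x2) - d j * (y1 - y2)
    + (t j - t j.+1 - d j * (c j - c j.+1)).
  rewrite /x1 /x2 /y1 /y2; ring.
rewrite rel subrr addr0.
apply: (le_trans (@sqmodD R _ _)); rewrite sqmodN sqmodM.
have := @sqmodD R x1 (- x2); rewrite sqmodN => H1.
have := @sqmodD R y1 (- y2); rewrite sqmodN => H2.
have s0 := @sqmod_ge0 R (d j).
have : sqmod (d j) * sqmod (y1 - y2) <= sqmod (d j) * (4 * e).
  apply: ler_wpM2l => //; apply: (le_trans H2); lra.
nra.
Qed.

Lemma scoef_trunc (R : realType) (f d : nat -> R[i]) n k : (k <= n)%N ->
  @scoef R d (fun u => if (u <= n)%N then f u else 0) n.+1 k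
  = f k * d k + (psum f d n - psum f d k).
Proof.
move=> kn; rewrite /scoef kn.
have pk : psum f d n = psum f d k + \sum_(k.+1 <= u < n.+1) f u * (d u - d u.-1).
  by rewrite /psum -big_cat_nat.
rewrite pk [psum f d k + _]addrC addrK; congr (_ + _).
by apply: eq_big_nat => u /andP[_ un]; rewrite -ltnS un.
Qed.

Lemma existence (R : realType) (alpha : R) (d : nat -> R[i])
    (T : {poly R[i]} -> {poly R[i]}) (f : nat -> R[i]) (S : R[i]) :
  (forall (a : R[i]) (u v : {poly R[i]}), T (a *: u + v) = a *: T u + T v) ->
  (forall n, T (laguerre (alpha + 1) n) = d n *: laguerre (alpha + 1) n) ->
  l2 f -> l2 (gseq f d S) ->
  (fun n => n.+1%:R * sqmod (f n * d n - gseq f d S n)) @ \oo --> 0 ->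
  in_graph_closure alpha T f (gseq f d S).
Proof.
move=> hT hTp hf hg hiii e e0.
set g := gseq f d S.
have gE k : g k = S - psum f d k + f k * d k.
  rewrite /g /gseq; case: eqP => [->|] //.
  by rewrite /psum big_geq // subr0.
have hiii' : (fun n => n.+1%:R * sqmod (psum f d n - S)) @ \oo --> 0.
  suff -> : (fun n => n.+1%:R * sqmod (psum f d n - S)) =
            (fun n => n.+1%:R * sqmod (f n * d n - g n)) by [].
  by apply/funext => n; rewrite gE; congr (_ * sqmod _); ring.
set A := fun n => limn (series (fun k => sqmod (f k))) - series (fun k => sqmod (f k)) n.+1.
set B := fun n => limn (series (fun k => sqmod (g k))) - series (fun k => sqmod (g k)) n.+1
                  + n.+1%:R * sqmod (psum f d n - S).
have HA : A @ \oo --> 0 by apply: tail_to0.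
have HB : B @ \oo --> 0.
  by rewrite -[0]addr0; apply: cvgD => //; apply: tail_to0.
have [n [An Bn]] := filter_ex (filterI (cvgr_lt _ HA _ e0) (cvgr_lt _ HB _ e0)).
set cn := fun k => if (k <= n)%N then f k else 0.
set tn := fun k => if (k <= n)%N then @scoef R d cn n.+1 k else 0.
exists (\sum_(k < n.+1) cn k *: laguerre alpha k), cn, tn; split.
- exists n.+1; split => // k; rewrite /cn ltnNge => /negbTE -> //.
- exists n.+1; split; first by move=> k; rewrite /tn ltnNge => /negbTE ->.
  rewrite (@Tsum R alpha d T hT hTp); apply: eq_bigr => k _.
  by rewrite /tn -ltnS ltn_ord.
- rewrite /l2dist2 (@series_tail_cvg R _ (fun k => sqmod (f k)) n) //; last first.
    by move=> k; rewrite /cn ltnNge => /negbTE ->; rewrite subr0.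
  have -> : series (fun k => sqmod (f k - cn k)) n.+1 = 0.
    rewrite /series /= big_nat_cond big1 // => k /andP[/andP[_]]; rewrite ltnS /cn => -> _.
    by rewrite subrr sqmod0.
  by rewrite addr0.
- rewrite /l2dist2 (@series_tail_cvg R _ (fun k => sqmod (g k)) n) //; last first.
    by move=> k; rewrite /tn ltnNge => /negbTE ->; rewrite subr0.
  have -> : series (fun k => sqmod (g k - tn k)) n.+1 = n.+1%:R * sqmod (psum f d n - S).
    rewrite /series /=.
    rewrite (eq_big_nat _ _ (F2 := fun _ => sqmod (psum f d n - S))); last first.
      move=> k /andP[_]; rewrite ltnS => kn; rewrite /tn kn scoef_trunc // gE.
      rewrite -sqmodN; congr sqmod; ring.
    rewrite sumr_const_nat subn0 -mulr_natl; ring.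
  exact: Bn.
Qed.

Unset Implicit Arguments.

Theorem theorem7 (R : realType) (alpha : R) (d : nat -> R[i])
    (T : {poly R[i]} -> {poly R[i]}) (f : nat -> R[i]) (S : R[i]) :
  -1 < alpha ->
  inDtilde d ->
  (* T = E_{p,d} with p = (L_n^(alpha+1)) : the linear map with T p_n = d_n p_n *)
  (forall (a : R[i]) (u v : {poly R[i]}), T (a *: u + v) = a *: T u + T v) ->
  (forall n, T (laguerre (alpha + 1) n) = d n *: laguerre (alpha + 1) n) ->
  l2 f ->
  (* (i) *)
  (fun n => sqmod (psum f d n - S)) @ \oo --> 0 ->
  (* (ii) *)
  l2 (gseq f d S) ->
  (* (iii) *)
  (fun n => n.+1%:R * sqmod (f n * d n - gseq f d S n)) @ \oo --> 0 ->
  in_closure_domain alpha T f /\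
  in_graph_closure alpha T f (gseq f d S) /\
  (forall h, l2 h -> in_graph_closure alpha T f h -> h = gseq f d S).
Proof.
move=> _ _ hT hTp hf _ hg hiii.
have hcl := @existence R alpha d T f S hT hTp hf hg hiii.
split; first by exists (gseq f d S).
split => // h hh hhcl.
set g := gseq f d S.
have relh := @closure_rel R alpha d T f h hT hTp hf hh hhcl.
have relg := @closure_rel R alpha d T f g hT hTp hf hg hcl.
have C k : h k - g k = h 0%N - g 0%N.
  elim: k => // k <-; apply/eqP; rewrite -subr_eq0; apply/eqP.
  have E : (h k - h k.+1) - (g k - g k.+1) = 0 by rewrite relh relg subrr.
  rewrite -oppr0 -E; ring.
have C0 : h 0%N - g 0%N = 0.
  apply: sqmod_eq0.
  have Hh := cvg_series_cvg_0 hh; have Hg := cvg_series_cvg_0 hg.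
  have : sqmod (h 0%N - g 0%N) / 2 <= 0 + 0.
    apply: (ler_cvg_to (cvg_cst _) (cvgD Hh Hg)).
    apply: nearW => k /=; rewrite -(C k).
    suff : sqmod (h k - g k) / 2 <= sqmod (h k) + sqmod (g k) by [].
    have := @sqmodD R (h k) (- g k); rewrite sqmodN; lra.
  lra.
apply/funext => k; apply/eqP; rewrite -subr_eq0 C C0 //.
Qed.
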